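(* Let $(V,b,\mu)$ be a locally finite, weighted, connected graph with $\mu(x)\geq\mu_0$ for all $x\in V$, for some constant $\mu_0>0$, and let $\theta$ be a phase function on it. Fix $x_0\in V$ and, for $n\in\mathbb{Z}_+$, let $\beta_n=\frac{d_{2n}p_{2n}}{\mu_0 n}$ and let $\chi_n$ be the cut-off function defined below. Then for every $u\in\ell^2(V,\mu)$, every $n\in\mathbb{Z}_+$ and every $0<\varepsilon<1$, $$\|\chi_n\Delta_{b,\theta}u\|^2\leq(1-\varepsilon)^{-1}\|\Delta_{b,\theta}(\chi_nu)\|^2+\left(\frac{9+4\varepsilon}{(1-\varepsilon)\varepsilon}\right)\beta_n^2\|u\|^2.$$
   Context: $V$ is a countably infinite set, $\mu\colon V\to(0,\infty)$, and $b\colon V\times V\to[0,\infty)$ satisfies $b(x,y)=b(y,x)$, $b(x,x)=0$, $\deg(x):=\#\{y: b(x,y)>0\}<\infty$; $x\sim y$ means $b(x,y)>0$; connectedness means any two vertices are joined by a finite path of neighbors, and $d(x,y)$ is the combinatorial (path-length) distance; $r(x)=d(x_0,x)$. A phase function is $\theta\colon V\times V\to[-\pi,\pi]$ with $\theta(x,y)=-\theta(y,x)$. $\ell^2(V,\mu)$ is the space of $f\colon V\to\mathbb{C}$ with $\|f\|^2=\sum_x\mu(x)|f(x)|^2<\infty$, inner product $(f,g)=\sum_x\mu(x)f(x)\overline{g(x)}$. The magnetic Laplacian is $(\Delta_{b,\theta}u)(x)=\frac{1}{\mu(x)}\sum_{y}b(x,y)(u(x)-e^{i\theta(x,y)}u(y))$.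 $B(x_0,n)=\{x: r(x)\leq n\}$ (plus edges between such vertices), $d_n=\max_{x\in B(x_0,n)}\deg(x)$, $p_n=\max_{x\in B(x_0,n)}\max_{y\in V}b(x,y)$. The cut-off is $\chi_n(x)=\left(\left(\frac{2n-d(x_0,x)}{n}\right)\vee 0\right)\wedge 1$, where $a\wedge z=\min\{a,z\}$, $a\vee z=\max\{a,z\}$. *)

(* Defs.v *)
From Stdlib Require Import Reals List ClassicalEpsilon.
From Coquelicot Require Import Coquelicot.
Open Scope R_scope.

Section Graph.
Variable V : Type.

Inductive walk (b : V -> V -> R) : nat -> V -> V -> Prop :=
| walk0 x : walk b 0 x x
| walkS n x y z : 0 < b x y -> walk b n y z -> walk b (S n) x z.

(* combinatorial distance: the least length of a walk (meaningful on a
   connected graph) *)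
Definition dist (b : V -> V -> R) (x y : V) : nat :=
  epsilon (inhabits 0%nat)
    (fun n => walk b n x y /\ forall m, walk b m x y -> (n <= m)%nat).

Definition connected (b : V -> V -> R) : Prop :=
  forall x y, exists n, walk b n x y.

Definition lsumR (l : list V) (f : V -> R) : R :=
  fold_right Rplus 0 (map f l).
Definition lsumC (l : list V) (f : V -> C) : C :=
  fold_right Cplus (RtoC 0) (map f l).

Definition cexpi (t : R) : C := (cos t, sin t).

(* magnetic Laplacian; nbr x is a duplicate-free list of the neighbours of x *)
Definition mag_lap (b : V -> V -> R) (mu : V -> R) (theta : V -> V -> R)
  (nbr : V -> list V) (u : V -> C) (x : V) : C :=
  Cmult (RtoC (/ mu x))
    (lsumC (nbr x) (fun y => Cmult (RtoC (b x y))
                              (Cminus (u x) (Cmult (cexpi (theta x y)) (u y))))).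

(* squared l^2(V,mu) norm: supremum of finite partial sums (in Rbar) *)
Definition l2norm2 (mu : V -> R) (f : V -> C) : Rbar :=
  Lub_Rbar (fun r => exists l : list V, NoDup l /\
                      r = lsumR l (fun x => mu x * (Cmod (f x)) ^ 2)).

(* d_n = max_{x in B(x0,n)} deg x, p_n = max_{x in B(x0,n)} max_y b(x,y) *)
Definition dmax (b : V -> V -> R) (nbr : V -> list V) (x0 : V) (n : nat) : R :=
  real (Lub_Rbar (fun r => exists x, (dist b x0 x <= n)%nat /\
                                     r = INR (length (nbr x)))).
Definition pmax (b : V -> V -> R) (x0 : V) (n : nat) : R :=
  real (Lub_Rbar (fun r => exists x y, (dist b x0 x <= n)%nat /\ r = b x y)).

Definition cutoff (b : V -> V -> R) (x0 : V) (n : nat) (x : V) : R :=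
  Rmin (Rmax ((2 * INR n - INR (dist b x0 x)) / INR n) 0) 1.

End Graph.

(* Main.v *)
Require Import Defs.
From Stdlib Require Import Reals List ClassicalEpsilon Classical Lra Lia.
From Coquelicot Require Import Coquelicot.
Open Scope R_scope.


Lemma lsumR_nil {V} (f : V -> R) : lsumR V nil f = 0.
Proof. reflexivity. Qed.
Lemma lsumR_cons {V} a l (f : V -> R) : lsumR V (a :: l) f = f a + lsumR V l f.
Proof. reflexivity. Qed.

Lemma lsumR_le {V} l (f g : V -> R) :
  (forall x, In x l -> f x <= g x) -> lsumR V l f <= lsumR V l g.
Proof.
  induction l as [|a l IH]; intros H; rewrite ?lsumR_nil, ?lsumR_cons; [lra|].
  assert (f a <= g a) by (apply H; left; auto).
  assert (lsumR V l f <= lsumR V l g) by (apply IH; intros; apply H; right; auto). lra.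
Qed.

Lemma lsumR_nonneg {V} l (f : V -> R) :
  (forall x, In x l -> 0 <= f x) -> 0 <= lsumR V l f.
Proof.
  intros H. replace 0 with (lsumR V l (fun _ => 0)).
  - apply lsumR_le. auto.
  - induction l; rewrite ?lsumR_nil, ?lsumR_cons; auto.
    rewrite IHl; [lra|]. intros; apply H; right; auto.
Qed.

Lemma lsumR_plus {V} l (f g : V -> R) :
  lsumR V l (fun x => f x + g x) = lsumR V l f + lsumR V l g.
Proof. induction l; rewrite ?lsumR_nil, ?lsumR_cons; [lra|]. rewrite IHl; lra. Qed.

Lemma lsumR_scal {V} l c (f : V -> R) :
  lsumR V l (fun x => c * f x) = c * lsumR V l f.
Proof. induction l; rewrite ?lsumR_nil, ?lsumR_cons; [lra|]. rewrite IHl; lra. Qed.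

Lemma lsumR_ext {V} l (f g : V -> R) :
  (forall x, In x l -> f x = g x) -> lsumR V l f = lsumR V l g.
Proof.
  intros H; apply Rle_antisym; apply lsumR_le; intros x Hx; rewrite H; auto; lra.
Qed.

Lemma lsumR_swap {V W} (l1 : list V) (l2 : list W) (h : V -> W -> R) :
  lsumR V l1 (fun x => lsumR W l2 (fun y => h x y)) =
  lsumR W l2 (fun y => lsumR V l1 (fun x => h x y)).
Proof.
  induction l1 as [|a l1 IH]; rewrite ?lsumR_nil, ?lsumR_cons.
  - induction l2; rewrite ?lsumR_nil, ?lsumR_cons; auto. rewrite <- IHl2. rewrite lsumR_nil. lra.
  - rewrite IH. rewrite <- lsumR_plus. reflexivity.
Qed.

Lemma lsumR_In {V} l (f : V -> R) a :
  (forall x, In x l -> 0 <= f x) -> In a l -> f a <= lsumR V l f.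
Proof.
  induction l as [|c l IH]; intros H Ha; [destruct Ha|]. rewrite lsumR_cons.
  destruct Ha as [<-|Ha].
  - assert (0 <= lsumR V l f) by (apply lsumR_nonneg; intros; apply H; right; auto). lra.
  - assert (f a <= lsumR V l f) by (apply IH; auto; intros; apply H; right; auto).
    assert (0 <= f c) by (apply H; left; auto). lra.
Qed.

Lemma lsumR_const1 {V} (l : list V) : lsumR V l (fun _ => 1) = INR (length l).
Proof. induction l; rewrite ?lsumR_nil, ?lsumR_cons; simpl length; [simpl; lra|].
  rewrite S_INR, IHl. lra. Qed.

Definition indP (P : Prop) : R := if excluded_middle_informative P then 1 else 0.

Lemma ind_01 P : 0 <= indP P <= 1.
Proof. unfold indP; destruct excluded_middle_informative; lra. Qed.

Lemma lsumR_remove {V} (deq : forall x y : V, {x = y} + {x <> y}) l (g : V -> R) a :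
  (forall x, 0 <= g x) -> In a l -> g a + lsumR V (remove deq a l) g <= lsumR V l g.
Proof.
  intros Hg. induction l as [|c l IH]; intros Ha; [destruct Ha|].
  simpl remove. destruct (deq a c) as [->|Hne].
  - rewrite lsumR_cons.
    assert (lsumR V (remove deq c l) g <= lsumR V l g).
    { clear IH Ha. induction l as [|d l IH2]; simpl remove; [simpl; lra|].
      destruct (deq c d); rewrite ?lsumR_cons; [specialize (Hg d); lra|]. lra. }
    lra.
  - destruct Ha as [->|Ha]; [congruence|]. rewrite !lsumR_cons.
    specialize (IH Ha). lra.
Qed.

Lemma lsumR_sub {V} (l1 l2 : list V) (g : V -> R) :
  NoDup l1 -> (forall x, 0 <= g x) ->
  lsumR V l1 (fun x => indP (In x l2) * g x) <= lsumR V l2 g.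
Proof.
  pose (deq := fun x y : V => excluded_middle_informative (x = y)).
  intros Hnd Hg. revert l2. induction Hnd as [|a l1 Hna Hnd IH]; intros l2.
  - rewrite lsumR_nil. apply lsumR_nonneg; auto.
  - rewrite lsumR_cons. unfold indP at 1. destruct excluded_middle_informative as [Hin|Hin].
    + pose proof (lsumR_remove deq l2 g a Hg Hin).
      specialize (IH (remove deq a l2)).
      assert (lsumR V l1 (fun x => indP (In x l2) * g x) =
              lsumR V l1 (fun x => indP (In x (remove deq a l2)) * g x)).
      { apply lsumR_ext. intros x Hx. assert (x <> a) by (intro; subst; auto).
        unfold indP. destruct (excluded_middle_informative (In x l2)) as [h1|h1];
        destruct (excluded_middle_informative (In x (remove deq a l2))) as [h2|h2]; auto.
        - exfalso; apply h2. apply in_in_remove; auto.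
        - exfalso; apply h1. eapply in_remove; eauto. }
      lra.
    + specialize (IH l2). lra.
Qed.

Lemma cs_step (a s T k : R) : 0 <= k -> 0 <= T -> s * s <= k * T ->
  (a + s) * (a + s) <= (k + 1) * (a * a + T).
Proof.
  intros Hk HT H. destruct (Req_dec k 0) as [->|Hk0].
  - assert (s * s <= 0) by (rewrite Rmult_0_l in H; lra). assert (s = 0) by nra. subst. nra.
  - assert (0 < k) by lra. pose proof (Rle_0_sqr (k * a - s)) as Hq. unfold Rsqr in Hq.
    assert (HH : 0 <= k * ((k + 1) * (a * a + T) - (a + s) * (a + s))).
    { assert (k * (k + 1) * T >= (k + 1) * (s * s)) by nra. nra. }
    assert (0 <= (k + 1) * (a * a + T) - (a + s) * (a + s)).
    { destruct (Rle_or_lt 0 ((k + 1) * (a * a + T) - (a + s) * (a + s))); auto.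
      assert (k * ((k + 1) * (a * a + T) - (a + s) * (a + s)) < 0) by (apply Rmult_pos_neg; auto; lra). lra. }
    lra.
Qed.

Lemma lsumR_cs {V} l (f : V -> R) :
  lsumR V l f * lsumR V l f <= INR (length l) * lsumR V l (fun x => f x * f x).
Proof.
  induction l; rewrite ?lsumR_nil, ?lsumR_cons; simpl length; [rewrite ?lsumR_nil; simpl INR; lra|].
  rewrite S_INR. apply cs_step; auto. apply pos_INR.
  apply lsumR_nonneg; intros; nra.
Qed.

Lemma walk_app_end {V} (b : V -> V -> R) m x y z :
  walk V b m x y -> 0 < b y z -> walk V b (S m) x z.
Proof.
  induction 1; intros Hbz.
  - apply walkS with z; auto; constructor.
  - apply walkS with y; auto.
Qed.

Lemma min_exists (P : nat -> Prop) :
  (exists n, P n) -> exists n, P n /\ forall m, P m -> (n <= m)%nat.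
Proof.
  intros Hex. destruct (Wf_nat.dec_inh_nat_subset_has_unique_least_element P
    (fun n => classic (P n)) Hex) as [n [[Hn Hmin] _]].
  exists n; split; auto.
Qed.

Lemma dist_spec {V} (b : V -> V -> R) x y :
  connected V b ->
  walk V b (Defs.dist V b x y) x y /\ forall m, walk V b m x y -> (Defs.dist V b x y <= m)%nat.
Proof.
  intros Hc. unfold Defs.dist. apply epsilon_spec.
  apply min_exists. apply Hc.
Qed.

Lemma dist_nbr {V} (b : V -> V -> R) x0 x y :
  connected V b -> 0 < b x y -> (Defs.dist V b x0 y <= S (Defs.dist V b x0 x))%nat.
Proof.
  intros Hc Hb. destruct (dist_spec b x0 x Hc) as [Hw _].
  destruct (dist_spec b x0 y Hc) as [_ Hm].
  apply Hm. eapply walk_app_end; eauto.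
Qed.

Fixpoint reach {V} (nbr : V -> list V) (k : nat) (x : V) : list V :=
  match k with
  | O => x :: nil
  | S k => x :: flat_map (reach nbr k) (nbr x)
  end.

Lemma reach_walk {V} (b : V -> V -> R) nbr
  (nbr_spec : forall x y, In y (nbr x) <-> 0 < b x y) m x z :
  walk V b m x z -> forall k, (m <= k)%nat -> In z (reach nbr k x).
Proof.
  induction 1 as [x|m x y z Hb Hw IH]; intros k Hk.
  - destruct k; simpl; auto.
  - destruct k as [|k]; [lia|]. simpl. right. apply in_flat_map.
    exists y; split; [apply nbr_spec; auto|]. apply IH; lia.
Qed.

Lemma clamp_lip (a c : R) : Rabs (Rmin (Rmax a 0) 1 - Rmin (Rmax c 0) 1) <= Rabs (a - c).
Proof.
  unfold Rmin, Rmax.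
  repeat (destruct Rle_dec); unfold Rabs; repeat destruct Rcase_abs; lra.
Qed.

Lemma cutoff_lip {V} (b : V -> V -> R) x0 n x y :
  (0 < n)%nat -> connected V b -> (forall x y, b x y = b y x) -> 0 < b x y ->
  Rabs (cutoff V b x0 n y - cutoff V b x0 n x) <= / INR n.
Proof.
  intros Hn Hc Hs Hb. unfold cutoff.
  eapply Rle_trans; [apply clamp_lip|].
  pose proof (dist_nbr b x0 x y Hc Hb).
  assert (Hb' : 0 < b y x) by (rewrite Hs; auto).
  pose proof (dist_nbr b x0 y x Hc Hb').
  assert (HnR : 0 < INR n) by (apply lt_0_INR; lia).
  set (dx := Defs.dist V b x0 x) in *. set (dy := Defs.dist V b x0 y) in *.
  assert (Habs : Rabs (INR dx - INR dy) <= 1).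
  { assert (INR dy <= INR dx + 1) by (rewrite <- S_INR; apply le_INR; auto).
    assert (INR dx <= INR dy + 1) by (rewrite <- S_INR; apply le_INR; auto).
    unfold Rabs; destruct Rcase_abs; lra. }
  replace ((2 * INR n - INR dy) / INR n - (2 * INR n - INR dx) / INR n)
    with ((INR dx - INR dy) * / INR n) by (field; lra).
  rewrite Rabs_mult, (Rabs_right (/ INR n)) by (apply Rle_ge, Rlt_le, Rinv_0_lt_compat; auto).
  assert (0 < / INR n) by (apply Rinv_0_lt_compat; auto). nra.
Qed.

Lemma cutoff_out {V} (b : V -> V -> R) x0 n x :
  (0 < n)%nat -> (2 * n <= Defs.dist V b x0 x)%nat -> cutoff V b x0 n x = 0.
Proof.
  intros Hn Hd. unfold cutoff.
  assert (HnR : 0 < INR n) by (apply lt_0_INR; lia).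
  assert (2 * INR n <= INR (Defs.dist V b x0 x)).
  { replace 2 with (INR 2) by (simpl; lra). rewrite <- mult_INR. apply le_INR; auto. }
  assert ((2 * INR n - INR (Defs.dist V b x0 x)) / INR n <= 0).
  { unfold Rdiv. assert (0 < / INR n) by (apply Rinv_0_lt_compat; auto). nra. }
  unfold Rmax, Rmin. repeat destruct Rle_dec; lra.
Qed.

Lemma cutoff_diff_zero {V} (b : V -> V -> R) x0 n x y :
  (0 < n)%nat -> connected V b -> (forall x y, b x y = b y x) -> 0 < b x y ->
  (~ (Defs.dist V b x0 x <= 2 * n)%nat \/ ~ (Defs.dist V b x0 y <= 2 * n)%nat) ->
  cutoff V b x0 n y - cutoff V b x0 n x = 0.
Proof.
  intros Hn Hc Hs Hb H.
  pose proof (dist_nbr b x0 x y Hc Hb).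
  assert (Hb' : 0 < b y x) by (rewrite Hs; auto).
  pose proof (dist_nbr b x0 y x Hc Hb').
  rewrite !cutoff_out; auto; try lra; lia.
Qed.

Lemma lub_elem_le (E : R -> Prop) M r :
  (forall r, E r -> r <= M) -> E r -> r <= real (Lub_Rbar E).
Proof.
  intros HM Hr. destruct (Lub_Rbar_correct E) as [Hub Hl].
  specialize (Hub r Hr). assert (Rbar_le (Lub_Rbar E) (Finite M)) by (apply Hl; intros x Hx; apply HM; auto).
  destruct (Lub_Rbar E); simpl in *; auto; contradiction.
Qed.

Lemma l2_elem {V} (mu : V -> R) (f : V -> C) l :
  NoDup l -> Rbar_le (Finite (lsumR V l (fun x => mu x * Cmod (f x) ^ 2))) (l2norm2 V mu f).
Proof.
  intros Hl. destruct (Lub_Rbar_correct (fun r => exists l : list V, NoDup l /\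
                      r = lsumR V l (fun x => mu x * (Cmod (f x)) ^ 2))) as [Hub _].
  apply Hub. eauto.
Qed.

Lemma l2_ub {V} (mu : V -> R) (f : V -> C) (ub : Rbar) :
  (forall l, NoDup l -> Rbar_le (Finite (lsumR V l (fun x => mu x * Cmod (f x) ^ 2))) ub) ->
  Rbar_le (l2norm2 V mu f) ub.
Proof.
  intros H. unfold l2norm2.
  destruct (Lub_Rbar_correct (fun r => exists l : list V, NoDup l /\
                      r = lsumR V l (fun x => mu x * (Cmod (f x)) ^ 2))) as [_ Hl].
  apply Hl. intros r [l [Hnd ->]]. auto.
Qed.

Lemma lsumC_plus {V} l (f g : V -> C) :
  lsumC V l (fun x => Cplus (f x) (g x)) = Cplus (lsumC V l f) (lsumC V l g).
Proof. induction l; unfold lsumC in *; simpl; [ring|]. rewrite IHl. ring. Qed.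

Lemma lsumC_scal {V} l c (f : V -> C) :
  lsumC V l (fun x => Cmult c (f x)) = Cmult c (lsumC V l f).
Proof. induction l; unfold lsumC in *; simpl; [ring|]. rewrite IHl. ring. Qed.

Lemma lsumC_mod {V} l (f : V -> C) :
  Cmod (lsumC V l f) <= lsumR V l (fun x => Cmod (f x)).
Proof.
  induction l; unfold lsumC, lsumR in *; simpl.
  - rewrite Cmod_0. lra.
  - eapply Rle_trans; [apply Cmod_triangle|]. lra.
Qed.

Lemma cexpi_mod t : Cmod (cexpi t) = 1.
Proof.
  unfold cexpi, Cmod; simpl fst; simpl snd.
  replace (cos t ^ 2 + sin t ^ 2) with 1; [apply sqrt_1|].
  rewrite <- (sin2_cos2 t); unfold Rsqr; ring.
Qed.

Lemma ind_sq P : indP P * indP P = indP P.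
Proof. unfold indP; destruct excluded_middle_informative; ring. Qed.

Lemma sq_split (a c e : R) : 0 < e < 1 -> 0 <= a -> 0 <= c ->
  (a + c) ^ 2 <= / (1 - e) * a ^ 2 + / e * c ^ 2.
Proof.
  intros He Ha Hc.
  assert (H : 0 <= (e * a - (1 - e) * c) ^ 2) by (apply pow2_ge_0).
  assert (e * (1 - e) * (a + c) ^ 2 <= e * (1 - e) * (/ (1 - e) * a ^ 2 + / e * c ^ 2)).
  { replace (e * (1 - e) * (/ (1 - e) * a ^ 2 + / e * c ^ 2)) with (e * a ^ 2 + (1 - e) * c ^ 2)
      by (field; lra). nra. }
  assert (0 < e * (1 - e)) by nra.
  apply Rmult_le_reg_l with (e * (1 - e)); auto.
Qed.

Lemma indP_true (P : Prop) : P -> indP P = 1.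
Proof. intros H; unfold indP; destruct excluded_middle_informative; tauto. Qed.
Lemma indP_false (P : Prop) : ~ P -> indP P = 0.
Proof. intros H; unfold indP; destruct excluded_middle_informative; tauto. Qed.
Lemma indP_ext (P Q : Prop) : (P <-> Q) -> indP P = indP Q.
Proof. intros H; unfold indP; do 2 destruct excluded_middle_informative; tauto. Qed.

Theorem proposition5p3
  (V : Type)
  (Vcount : exists e : nat -> V,
      (forall i j, e i = e j -> i = j) /\ (forall x, exists i, e i = x))
  (b : V -> V -> R)
  (b_sym : forall x y, b x y = b y x)
  (b_nonneg : forall x y, 0 <= b x y)
  (b_diag : forall x, b x x = 0)
  (nbr : V -> list V)
  (nbr_nodup : forall x, NoDup (nbr x))
  (nbr_spec : forall x y, In y (nbr x) <-> 0 < b x y)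
  (b_conn : connected V b)
  (mu : V -> R) (mu0 : R)
  (mu0_pos : 0 < mu0)
  (mu_ge : forall x, mu0 <= mu x)
  (theta : V -> V -> R)
  (theta_range : forall x y, - PI <= theta x y <= PI)
  (theta_anti : forall x y, theta x y = - theta y x)
  (x0 : V)
  (u : V -> C)
  (u_l2 : is_finite (l2norm2 V mu u))
  (n : nat) (n_pos : (0 < n)%nat)
  (eps : R) (eps_pos : 0 < eps) (eps_lt1 : eps < 1) :
  let Lap := mag_lap V b mu theta nbr in
  let chi := cutoff V b x0 n in
  let beta := dmax V b nbr x0 (2 * n) * pmax V b x0 (2 * n) / (mu0 * INR n) in
  Rbar_le
    (l2norm2 V mu (fun x => Cmult (RtoC (chi x)) (Lap u x)))
    (Rbar_plus
       (Rbar_mult (/ (1 - eps))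
          (l2norm2 V mu (Lap (fun x => Cmult (RtoC (chi x)) (u x)))))
       ((9 + 4 * eps) / ((1 - eps) * eps) * beta ^ 2 * real (l2norm2 V mu u))).
Proof.
  intros Lap chi beta.
  pose (deq := fun x y : V => excluded_middle_informative (x = y)).
  assert (mu_pos : forall x, 0 < mu x) by (intros x; specialize (mu_ge x); lra).
  set (d := dmax V b nbr x0 (2 * n)) in *.
  set (p := pmax V b x0 (2 * n)) in *.
  pose (inB := fun z => (Defs.dist V b x0 z <= 2 * n)%nat).
  pose (Bl := nodup deq (reach nbr (2 * n) x0)).
  assert (HBl : forall z, inB z -> In z Bl).
  { intros z Hz. unfold Bl. apply nodup_In. destruct (dist_spec b x0 z b_conn) as [Hw _].
    eapply reach_walk; eauto. }
  assert (HBlnd : NoDup Bl) by apply NoDup_nodup.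
  assert (inB0 : inB x0).
  { unfold inB. destruct (dist_spec b x0 x0 b_conn) as [_ Hm].
    specialize (Hm 0%nat (walk0 V b x0)). lia. }
  assert (Hd : forall x, inB x -> INR (length (nbr x)) <= d).
  { intros x Hx. unfold d, dmax.
    apply lub_elem_le with (M := lsumR V Bl (fun z => INR (length (nbr z)))).
    - intros r [z [Hz ->]]. apply (lsumR_In Bl (fun z => INR (length (nbr z))) z); [intros; apply pos_INR|]. apply HBl; exact Hz.
    - exists x; split; [exact Hx|reflexivity]. }
  assert (b_zero : forall x y, ~ In y (nbr x) -> b x y = 0).
  { intros x y H. destruct (b_nonneg x y) as [H'|H']; auto. exfalso; apply H, nbr_spec; auto. }
  assert (Hp : forall x y, inB x -> b x y <= p).
  { intros x y Hx. unfold p, pmax.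
    apply lub_elem_le with (M := lsumR V Bl (fun z => lsumR V (nbr z) (fun w => b z w))).
    - intros r [z [w [Hz ->]]].
      assert (Hnn : forall z, 0 <= lsumR V (nbr z) (fun w => b z w))
        by (intros; apply lsumR_nonneg; intros; apply b_nonneg).
      destruct (classic (In w (nbr z))) as [Hw|Hw].
      + apply Rle_trans with (lsumR V (nbr z) (fun w => b z w)).
        { apply (lsumR_In (nbr z) (fun w => b z w) w); auto. }
        apply (lsumR_In Bl (fun z => lsumR V (nbr z) (fun w => b z w)) z); [intros; apply Hnn|apply HBl; exact Hz].
      + rewrite b_zero; auto. apply lsumR_nonneg; auto.
    - exists x, y; split; [exact Hx|reflexivity]. }
  assert (d_nn : 0 <= d) by (eapply Rle_trans; [apply pos_INR|apply (Hd x0 inB0)]).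
  assert (p_nn : 0 <= p) by (rewrite <- (b_diag x0); apply Hp; auto).
  set (f := fun x => mu x * Cmod (u x) ^ 2).
  assert (f_nn : forall x, 0 <= f x).
  { intros x; unfold f. apply Rmult_le_pos; [left; auto|apply pow2_ge_0]. }
  set (S := real (l2norm2 V mu u)).
  assert (HS : forall l, NoDup l -> lsumR V l f <= S).
  { intros l Hl. pose proof (l2_elem mu u l Hl) as H. unfold S. rewrite <- u_l2 in H. exact H. }
  assert (S_nn : 0 <= S) by (apply (HS nil); constructor).
  pose (K := fun x => Cmult (RtoC (/ mu x)) (lsumC V (nbr x) (fun y => Cmult (RtoC (b x y))
        (Cmult (cexpi (theta x y)) (Cmult (RtoC (chi y - chi x)) (u y)))))).
  assert (HFK : forall x, Cmult (RtoC (chi x)) (Lap u x) =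
             Cplus (Lap (fun x => Cmult (RtoC (chi x)) (u x)) x) (K x)).
  { intros x. unfold Lap, mag_lap, K. rewrite <- !lsumC_scal. rewrite <- lsumC_plus.
    unfold lsumC. f_equal. apply map_ext. intros y. rewrite RtoC_minus. ring. }
  assert (Hterm : forall x y, In y (nbr x) ->
     Cmod (Cmult (RtoC (b x y)) (Cmult (cexpi (theta x y)) (Cmult (RtoC (chi y - chi x)) (u y))))
     <= p / INR n * (indP (inB x /\ inB y) * Cmod (u y))).
  { intros x y Hy. rewrite !Cmod_mult, !Cmod_R, cexpi_mod.
    assert (Hb : 0 < b x y) by (apply nbr_spec; auto).
    rewrite (Rabs_pos_eq (b x y)) by lra.
    assert (HnR : 0 < INR n) by (apply lt_0_INR; lia).
    pose proof (Cmod_ge_0 (u y)) as Hu.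
    destruct (classic (inB x /\ inB y)) as [[Hx Hy']|Hn].
    - rewrite indP_true by auto.
      pose proof (Hp x y Hx) as Hbp. pose proof (cutoff_lip b x0 n x y n_pos b_conn b_sym Hb) as Hl.
      change (cutoff V b x0 n) with chi in Hl.
      pose proof (Rabs_pos (chi y - chi x)).
      assert (0 < / INR n) by (apply Rinv_0_lt_compat; auto).
      unfold Rdiv.
      apply Rle_trans with (p * (1 * (/ INR n * Cmod (u y)))).
      + apply Rmult_le_compat; try lra.
        * apply Rmult_le_pos; [lra|]. apply Rmult_le_pos; auto.
        * apply Rmult_le_compat_l; [lra|]. apply Rmult_le_compat_r; auto.
      + lra.
    - rewrite indP_false by auto.
      assert (Hz : chi y - chi x = 0).
      { apply (cutoff_diff_zero b x0 n x y n_pos b_conn b_sym Hb). apply not_and_or; exact Hn. }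
      rewrite Hz, Rabs_R0. lra. }
  set (q := p / INR n).
  assert (HnR : 0 < INR n) by (apply lt_0_INR; lia).
  assert (q_nn : 0 <= q) by (unfold q, Rdiv; apply Rmult_le_pos; [auto|left; apply Rinv_0_lt_compat; auto]).
  assert (Hx_bound : forall x, mu x * Cmod (K x) ^ 2 <=
            q ^ 2 * d / mu0 ^ 2 * lsumR V (nbr x) (fun y => indP (inB y) * f y)).
  { intros x.
    assert (HK1 : Cmod (K x) <= / mu x * (q * lsumR V (nbr x) (fun y => indP (inB x /\ inB y) * Cmod (u y)))).
    { unfold K. rewrite Cmod_mult, Cmod_R, Rabs_pos_eq by (left; apply Rinv_0_lt_compat; auto).
      apply Rmult_le_compat_l; [left; apply Rinv_0_lt_compat; auto|].
      eapply Rle_trans; [apply lsumC_mod|]. rewrite <- lsumR_scal. apply lsumR_le. intros y Hy. apply Hterm; auto. }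
    assert (Hnn : 0 <= lsumR V (nbr x) (fun y => indP (inB y) * f y))
      by (apply lsumR_nonneg; intros; apply Rmult_le_pos; [apply ind_01|apply f_nn]).
    assert (HKnn : 0 <= Cmod (K x)) by apply Cmod_ge_0.
    assert (Hmu := mu_pos x). assert (Hmu0 := mu_ge x).
    assert (Hc : 0 <= q ^ 2 * d / mu0 ^ 2).
    { unfold Rdiv. apply Rmult_le_pos; [apply Rmult_le_pos; [apply pow2_ge_0|auto]|].
      left; apply Rinv_0_lt_compat; apply pow_lt; auto. }
    destruct (classic (inB x)) as [Hx|Hx].
    - set (A := lsumR V (nbr x) (fun y => indP (inB x /\ inB y) * Cmod (u y))) in HK1.
      assert (EA : A = lsumR V (nbr x) (fun y => indP (inB y) * Cmod (u y))).
      { apply lsumR_ext. intros y _. rewrite (indP_ext (inB x /\ inB y) (inB y)); tauto. }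
      assert (A_nn : 0 <= A).
      { rewrite EA. apply lsumR_nonneg; intros; apply Rmult_le_pos; [apply ind_01|apply Cmod_ge_0]. }
      pose proof (lsumR_cs (nbr x) (fun y => indP (inB y) * Cmod (u y))) as Hcs.
      rewrite <- EA in Hcs.
      set (T' := lsumR V (nbr x) (fun y => indP (inB y) * f y)) in *.
      assert (HT : lsumR V (nbr x) (fun y => indP (inB y) * Cmod (u y) * (indP (inB y) * Cmod (u y)))
                   <= / mu0 * T').
      { unfold T'. rewrite <- lsumR_scal. apply lsumR_le. intros y _.
        replace (indP (inB y) * Cmod (u y) * (indP (inB y) * Cmod (u y)))
          with ((indP (inB y) * indP (inB y)) * Cmod (u y) ^ 2) by ring.
        rewrite ind_sq. unfold f.
        pose proof (ind_01 (inB y)). pose proof (pow2_ge_0 (Cmod (u y))).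
        pose proof (mu_ge y).
        assert (0 < / mu0) by (apply Rinv_0_lt_compat; auto).
        replace (/ mu0 * (indP (inB y) * (mu y * Cmod (u y) ^ 2)))
          with (indP (inB y) * Cmod (u y) ^ 2 * (/ mu0 * mu y)) by ring.
        assert (1 <= / mu0 * mu y).
        { apply Rmult_le_reg_l with mu0; auto. rewrite <- Rmult_assoc, Rinv_r by lra. lra. }
        assert (0 <= indP (inB y) * Cmod (u y) ^ 2) by (apply Rmult_le_pos; lra). nra. }
      pose proof (Hd x Hx) as Hdx.
      pose proof (pos_INR (length (nbr x))).
      assert (T'_nn : 0 <= T') by auto.
      assert (HA2 : A * A <= d * (/ mu0 * T')).
      { eapply Rle_trans; [exact Hcs|]. apply Rmult_le_compat; auto.
        apply lsumR_nonneg; intros; nra. }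
      assert (Hq1 : Cmod (K x) ^ 2 <= (/ mu x * (q * A)) ^ 2).
      { apply pow_incr; split; auto. }
      assert (Hm : mu x * (/ mu x * (q * A)) ^ 2 = / mu x * (q * q) * (A * A)) by (field; lra).
      assert (Hmx : / mu x <= / mu0) by (apply Rinv_le_contravar; auto).
      assert (0 < / mu x) by (apply Rinv_0_lt_compat; auto).
      apply Rle_trans with (mu x * (/ mu x * (q * A)) ^ 2).
      { apply Rmult_le_compat_l; [lra|auto]. }
      rewrite Hm.
      apply Rle_trans with (/ mu0 * (q * q) * (d * (/ mu0 * T'))).
      { apply Rmult_le_compat; try nra. }
      right. field. lra.
    - assert (HA0 : lsumR V (nbr x) (fun y => indP (inB x /\ inB y) * Cmod (u y)) = 0).
      { transitivity (lsumR V (nbr x) (fun y => 0 * 0)).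
        - apply lsumR_ext. intros y _. rewrite indP_false by tauto. ring.
        - rewrite (lsumR_scal (nbr x) 0 (fun _ => 0)). ring. }
      rewrite HA0 in HK1. assert (Cmod (K x) = 0) by nra.
      rewrite H. replace (mu x * 0 ^ 2) with 0 by ring. apply Rmult_le_pos; auto. }
  assert (HKsum : forall l, NoDup l -> lsumR V l (fun x => mu x * Cmod (K x) ^ 2) <= beta ^ 2 * S).
  { intros l Hl.
    eapply Rle_trans; [apply lsumR_le; intros x _; apply Hx_bound|].
    rewrite lsumR_scal.
    assert (Hsw : lsumR V l (fun x => lsumR V (nbr x) (fun y => indP (inB y) * f y)) <= d * S).
    { eapply Rle_trans.
      { apply lsumR_le. intros x _.
        eapply Rle_trans; [|apply (lsumR_sub (nbr x) Bl (fun y => indP (In y (nbr x)) * (indP (inB y) * f y)))].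
        - right. apply lsumR_ext. intros y Hy.
          rewrite (indP_true (In y (nbr x))) by auto.
          destruct (classic (inB y)) as [Hb|Hb].
          + rewrite (indP_true (In y Bl)) by auto. ring.
          + rewrite (indP_false (inB y)) by auto. ring.
        - apply nbr_nodup.
        - intros y. apply Rmult_le_pos; [apply ind_01|apply Rmult_le_pos; [apply ind_01|apply f_nn]]. }
      rewrite lsumR_swap.
      apply Rle_trans with (lsumR V Bl (fun y => d * f y)).
      { apply lsumR_le. intros y _.
        assert (E : lsumR V l (fun x => indP (In y (nbr x)) * (indP (inB y) * f y)) =
                    (indP (inB y) * f y) * lsumR V l (fun x => indP (In x (nbr y)) * 1)).
        { rewrite <- lsumR_scal. apply lsumR_ext. intros x _.
          rewrite (indP_ext (In y (nbr x)) (In x (nbr y))); [ring|].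
          split; intros H; apply nbr_spec; rewrite b_sym; apply nbr_spec; auto. }
        rewrite E.
        pose proof (lsumR_sub l (nbr y) (fun _ => 1) Hl (fun _ => Rle_0_1)) as H.
        rewrite lsumR_const1 in H.
        pose proof (f_nn y).
        destruct (classic (inB y)) as [Hy|Hy].
        - rewrite indP_true by auto. pose proof (Hd y Hy).
          assert (0 <= lsumR V l (fun x => indP (In x (nbr y)) * 1))
            by (apply lsumR_nonneg; intros; pose proof (ind_01 (In x (nbr y))); lra).
          nra.
        - rewrite indP_false by auto. nra. }
      rewrite lsumR_scal. apply Rmult_le_compat_l; auto. }
    assert (Hc : 0 <= q ^ 2 * d / mu0 ^ 2).
    { unfold Rdiv. apply Rmult_le_pos; [apply Rmult_le_pos; [apply pow2_ge_0|auto]|].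
      left; apply Rinv_0_lt_compat; apply pow_lt; auto. }
    apply Rle_trans with (q ^ 2 * d / mu0 ^ 2 * (d * S)).
    { apply Rmult_le_compat_l; auto. }
    right. unfold beta, q. field. split; lra. }
  assert (HF : forall l, NoDup l ->
     lsumR V l (fun x => mu x * Cmod (Cmult (RtoC (chi x)) (Lap u x)) ^ 2) <=
     / (1 - eps) * lsumR V l (fun x => mu x * Cmod (Lap (fun x => Cmult (RtoC (chi x)) (u x)) x) ^ 2)
     + / eps * (beta ^ 2 * S)).
  { intros l Hl. pose proof (HKsum l Hl).
    apply Rle_trans with (lsumR V l (fun x =>
       / (1 - eps) * (mu x * Cmod (Lap (fun x => Cmult (RtoC (chi x)) (u x)) x) ^ 2)
       + / eps * (mu x * Cmod (K x) ^ 2))).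
    - apply lsumR_le. intros x _. rewrite HFK.
      set (G := Lap (fun x => Cmult (RtoC (chi x)) (u x)) x).
      pose proof (Cmod_triangle G (K x)).
      pose proof (sq_split (Cmod G) (Cmod (K x)) eps (conj eps_pos eps_lt1) (Cmod_ge_0 _) (Cmod_ge_0 _)).
      assert (Cmod (Cplus G (K x)) ^ 2 <= (Cmod G + Cmod (K x)) ^ 2)
        by (apply pow_incr; split; [apply Cmod_ge_0|auto]).
      pose proof (mu_pos x).
      assert (mu x * Cmod (Cplus G (K x)) ^ 2 <= mu x * (/ (1 - eps) * Cmod G ^ 2 + / eps * Cmod (K x) ^ 2)).
      { apply Rmult_le_compat_l; lra. }
      lra.
    - rewrite lsumR_plus, !lsumR_scal.
      apply Rplus_le_compat_l. apply Rmult_le_compat_l; [left; apply Rinv_0_lt_compat; lra|auto]. }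
  assert (HC : / eps * (beta ^ 2 * S) <= (9 + 4 * eps) / ((1 - eps) * eps) * beta ^ 2 * S).
  { assert (0 <= beta ^ 2 * S) by (apply Rmult_le_pos; [apply pow2_ge_0|auto]).
    assert (/ eps <= (9 + 4 * eps) / ((1 - eps) * eps)).
    { replace ((9 + 4 * eps) / ((1 - eps) * eps)) with (/ eps * ((9 + 4 * eps) / (1 - eps))) by (field; lra).
      assert (1 <= (9 + 4 * eps) / (1 - eps)).
      { apply Rmult_le_reg_l with (1 - eps); [lra|]. field_simplify; lra. }
      assert (0 < / eps) by (apply Rinv_0_lt_compat; lra). nra. }
    rewrite Rmult_assoc. apply Rmult_le_compat_r; auto. }
  assert (HGel := fun l (Hl : NoDup l) => l2_elem mu (Lap (fun x => Cmult (RtoC (chi x)) (u x))) l Hl).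
  remember (l2norm2 V mu (Lap (fun x => Cmult (RtoC (chi x)) (u x)))) as LG eqn:EG.
  destruct LG as [g| |].
  - apply l2_ub. intros l Hl. specialize (HGel l Hl). cbn [Rbar_le Rbar_plus Rbar_plus' Rbar_mult Rbar_mult'] in HGel |- *.
    pose proof (HF l Hl).
    assert (/ (1 - eps) * lsumR V l (fun x => mu x * Cmod (Lap (fun x => Cmult (RtoC (chi x)) (u x)) x) ^ 2)
            <= / (1 - eps) * g).
    { apply Rmult_le_compat_l; [left; apply Rinv_0_lt_compat; lra|auto]. }
    lra.
  - assert (Em : Rbar_mult (/ (1 - eps)) p_infty = p_infty).
    { assert (0 < / (1 - eps)) by (apply Rinv_0_lt_compat; lra).
      unfold Rbar_mult, Rbar_mult'. destruct Rle_dec as [h|h]; [|lra].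
      destruct Rle_lt_or_eq_dec; [reflexivity|lra]. }
    rewrite Em. simpl. destruct (l2norm2 V mu (fun x => Cmult (RtoC (chi x)) (Lap u x))); simpl; trivial.
  - specialize (HGel nil (NoDup_nil _)). simpl in HGel. contradiction.
Qed.
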